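(* For every finite metric space $X$, $\zeta(X;1/8)\le \alpha_X$.
   Context: Let $(X,d)$ be a finite metric space; $B(x,r)$ denotes the ball of radius $r$ about $x$. Random zero sets: given $\Delta,\zeta>0$ and $p\in(0,1)$, $X$ admits a random zero set at scale $\Delta$ which is $\zeta$-spreading with probability $p$ if there is a probability distribution $\mu$ over subsets $Z\subseteq X$ such that for all $x,y\in X$ with $d(x,y)\ge\Delta$, $\mu\{Z: y\in Z \text{ and } d(x,Z)\ge \Delta/\zeta\}\ge p$. $\zeta(X;p)$ is the least $\zeta>0$ such that for every $\Delta>0$, $X$ admits a random zero set at scale $\Delta$ which is $\zeta$-spreading with probability $p$. Padded decompositions: for a partition $P$ of $X$ and $x\in X$, $P(x)$ denotes the element of $P$ containing $x$. An $\alpha$-padded decomposition bundle of $X$ is, for every $\Delta>0$, a random partition $P_\Delta$ of $X$ with distribution $\nu$ such that (1) for every $P$ in the support of $\nu$ and every $C\in P$, $\mathrm{diam}(C)<\Delta$; (2) for every $x\in X$, $\nu\{P: B(x,\Delta/\alpha)\subseteq P(x)\}\ge 1/2$. The modulus of padded decomposability $\alpha_X$ is the largest $\alpha>0$ such that $X$ admits an $\alpha$-padded decomposition bundle. *)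

(* Defs.v *)
From HB Require Import structures.
From mathcomp Require Import all_boot all_order all_algebra.
From mathcomp Require Import boolp classical_sets reals constructive_ereal ereal.
Set Implicit Arguments. Unset Strict Implicit. Unset Printing Implicit Defensive.
Import Order.TTheory GRing.Theory Num.Theory.
Local Open Scope ring_scope.
Local Open Scope classical_set_scope.

Section Defs.
Variables (R : realType) (T : finType).

Definition is_metric (d : T -> T -> R) : Prop :=
  [/\ (forall x y, 0 <= d x y),
      (forall x y, d x y = 0 <-> x = y),
      (forall x y, d x y = d y x) &
      (forall x y z, d x z <= d x y + d y z)].

Definition is_distr (A : finType) (mu : {ffun A -> R}) : Prop :=
  (forall a, 0 <= mu a) /\ \sum_(a : A) mu a = 1.

Definition cball (d : T -> T -> R) (x : T) (r : R) : {set T} :=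
  [set y | d x y <= r].

(* diameter of a subset (0 for the empty set) *)
Definition diam (d : T -> T -> R) (C : {set T}) : R :=
  \big[Num.max/0]_(x in C) \big[Num.max/0]_(y in C) d x y.

(* d(x, Z) >= r, unfolded: every point of Z is at distance >= r from x *)
Definition dist_ge (d : T -> T -> R) (x : T) (Z : {set T}) (r : R) : bool :=
  [forall z in Z, r <= d x z].

(* X admits a random zero set at scale D which is z-spreading with prob. p *)
Definition random_zero_set (d : T -> T -> R) (D z p : R) : Prop :=
  exists mu : {ffun {set T} -> R}, is_distr mu /\
    forall x y, D <= d x y ->
      p <= \sum_(Z : {set T} | (y \in Z) && dist_ge d x Z (D / z)) mu Z.

Definition zeta (d : T -> T -> R) (p : R) : \bar R :=
  ereal_inf [set z%:E | z in
    [set z : R | 0 < z /\ forall D, 0 < D -> random_zero_set d D z p]].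

Definition padded_bundle (d : T -> T -> R) (a : R) : Prop :=
  forall D, 0 < D ->
    exists nu : {ffun {set {set T}} -> R}, is_distr nu /\
      (forall P, 0 < nu P ->
         finset.partition P [set: T] /\ (forall C, C \in P -> diam d C < D)) /\
      (forall x, 1 / 2 <=
         \sum_(P : {set {set T}} | cball d x (D / a) \subset finset.pblock P x) nu P).

Definition alpha (d : T -> T -> R) : \bar R :=
  ereal_inf [set a%:E | a in [set a : R | 0 < a /\ padded_bundle d a]].

End Defs.

(* Main.v *)
Require Import Defs.
From HB Require Import structures.
From mathcomp Require Import all_boot all_order all_algebra.
From mathcomp Require Import boolp classical_sets reals constructive_ereal ereal.
From mathcomp Require Import lra.
Set Implicit Arguments. Unset Strict Implicit. Unset Printing Implicit Defensive.
Import Order.TTheory GRing.Theory Num.Theory.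
Local Open Scope ring_scope.

Lemma card_split (U : finType) (a b : U) : a != b ->
  (#|[set S : {set U} | (a \notin S) && (b \in S)]| * 4 = #|{set U}|)%N.
Proof.
move=> ab.
pose D := ~: [set a; b].
have -> : [set S : {set U} | (a \notin S) && (b \in S)] = (fun S' => b |: S') @: powerset D.
  apply/setP => S; rewrite inE; apply/idP/imsetP.
  - case/andP => aS bS; exists (S :\ b).
      rewrite inE; apply/fintype.subsetP => z; rewrite !inE => /andP [zb zS].
      rewrite negb_or zb andbT; apply/eqP => za; by rewrite -za zS in aS.
    apply/setP => z; rewrite !inE; case: eqP => [->|] //=.
  - move=> [S' + ->]; rewrite inE => /fintype.subsetP sub.
    rewrite !inE eqxx andbT negb_or (negbTE ab) /=.
    apply/negP => /sub; by rewrite !inE eqxx.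
rewrite card_in_imset; last first.
  move=> S1 S2; rewrite !inE => /fintype.subsetP s1 /fintype.subsetP s2 e.
  apply/setP => z; move/setP: e => /(_ z); rewrite !inE.
  case: (z =P b) => [-> _|//].
  apply/idP/idP => [/s1|/s2]; by rewrite !inE eqxx orbT.
rewrite card_powerset.
have -> : #|{set U}| = #|powerset [set: U]|.
  rewrite -cardsT; apply: eq_card => S; by rewrite !inE finset.subsetT.
rewrite card_powerset cardsT.
have := cardsC [set a; b]; rewrite cards2 ab -/D => <-.
by rewrite expnD mulnC.
Qed.

Section Main.
Variables (R : realType) (T : finType) (d : T -> T -> R).

Lemma le_diam (C : {set T}) x y : x \in C -> y \in C -> d x y <= diam d C.
Proof.
move=> xC yC; rewrite /diam.
apply: le_trans (le_bigmax_cond _ _ xC).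
exact: (le_bigmax_cond _ _ yC).
Qed.

Lemma sum_ind (A : finType) (p : pred A) :
  \sum_(a : A) (p a)%:R = (#|[set a | p a]|%:R : R).
Proof.
rewrite (eq_bigr (fun a => if p a then 1 else 0)); last by move=> a _; case: (p a).
by rewrite -big_mkcond /= sumr_const cardsE.
Qed.

Lemma sum_eq1 (A : finType) (a0 : A) : \sum_(a : A) ((a0 == a)%:R : R) = 1.
Proof.
rewrite (bigD1 a0) //= eqxx big1 ?addr0 // => a; rewrite eq_sym => /negbTE ->.
by [].
Qed.

Lemma rzs al : 0 < al -> padded_bundle d al ->
  forall D, 0 < D -> random_zero_set d D al (1/8).
Proof.
move=> al0 pb D D0; have [nu [[nu0 nu1] [nupart nupad]]] := pb D D0.
pose N := #|{set {set T}}|.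
have N0 : (N%:R : R) != 0.
  rewrite pnatr_eq0 -lt0n; apply/card_gt0P; by exists finset.set0.
pose w : R := (N%:R)^-1.
have w0 : 0 <= w by rewrite invr_ge0 ler0n.
pose ZP (P : {set {set T}}) (S : {set {set T}}) := [set z | finset.pblock P z \in S].
exists [ffun Z => \sum_P \sum_S (nu P * w) * ((ZP P S == Z)%:R : R)].
split; first split.
- move=> Z; rewrite ffunE; apply: sumr_ge0 => P _; apply: sumr_ge0 => S _.
  by rewrite mulr_ge0 ?mulr_ge0.
- under eq_bigr do rewrite ffunE.
  rewrite exchange_big /= -[RHS]nu1; apply: eq_bigr => P _.
  rewrite exchange_big /=.
  rewrite (eq_bigr (fun _ => nu P * w)); last first.
    by move=> S _; rewrite -mulr_sumr sum_eq1 mulr1.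
  by rewrite sumr_const -mulr_natr -mulrA mulVf // mulr1.
move=> x y Dxy.
pose c := fun Z : {set T} => (y \in Z) && dist_ge d x Z (D / al).
have -> : \sum_(Z | c Z) [ffun Z => \sum_P \sum_S (nu P * w) * ((ZP P S == Z)%:R : R)] Z
   = \sum_P \sum_S (nu P * w) * (c (ZP P S))%:R.
  under eq_bigr do rewrite ffunE.
  rewrite exchange_big /=; apply: eq_bigr => P _.
  rewrite exchange_big /=; apply: eq_bigr => S _.
  rewrite -mulr_sumr; congr (_ * _).
  case cZ: (c (ZP P S)).
    rewrite (bigD1 (ZP P S)) //= eqxx big1 ?addr0 // => Z /andP [_ ].
    by rewrite eq_sym => /negbTE ->.
  rewrite big1 // => Z cZ'; case: eqP => // e; by rewrite e cZ' in cZ.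
pose pad P := cball d x (D / al) \subset finset.pblock P x.
have key : forall P, nu P * (pad P)%:R / 4 <= \sum_S (nu P * w) * (c (ZP P S))%:R.
  move=> P.
  have [->|nuP] := eqVneq (nu P) 0.
    by rewrite !mul0r big1 // => S _; rewrite !mul0r.
  have nuP0 : 0 < nu P by rewrite lt0r nuP nu0.
  have [part diamP] := nupart P nuP0.
  case/and3P: part => /eqP covP tI s0.
  have incov : forall z, z \in finset.cover P by move=> z; rewrite covP inE.
  case padP: (pad P); last first.
    rewrite mulr0 mul0r; apply: sumr_ge0 => S _; by rewrite mulr_ge0 ?mulr_ge0.
  pose a := finset.pblock P x; pose b := finset.pblock P y.
  have ab : a != b.
    apply/eqP => eab.
    have aP : a \in P by apply: pblock_mem.
    have xa : x \in a by rewrite mem_pblock.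
    have ya : y \in a by rewrite eab mem_pblock.
    have := diamP _ aP; have := le_diam xa ya.
    move=> h1 h2; have := le_lt_trans Dxy (le_lt_trans h1 h2); by rewrite ltxx.
  have h : \sum_(S : {set {set T}}) (nu P * w) * ((a \notin S) && (b \in S))%:R
           <= \sum_(S : {set {set T}}) (nu P * w) * (c (ZP P S))%:R.
    apply: ler_sum => S _; apply: ler_wpM2l; first by rewrite mulr_ge0.
    case/boolP: ((a \notin S) && (b \in S)) => //= /andP [aS bS].
    suff -> : c (ZP P S) by [].
    rewrite /c /ZP inE bS /=; apply/forall_inP => z; rewrite inE => zS.
    rewrite leNgt; apply/negP => lt.
    have zb : z \in cball d x (D / al) by rewrite inE ltW.
    have za := fintype.subsetP padP _ zb.
    by rewrite (same_pblock tI za) (negbTE aS) in zS.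
  apply: le_trans h.
  rewrite -mulr_sumr sum_ind.
  have cs : (#|[set S : {set {set T}} | (a \notin S) && (b \in S)]|%:R : R) = N%:R / 4.
    by rewrite /N -(card_split ab) natrM mulfK.
  rewrite cs mulr1 mulrA -[nu P * w * N%:R]mulrA mulVf // mulr1.
  by [].
apply: le_trans (ler_sum _ (fun P _ => key P)).
rewrite -mulr_suml.
have -> : \sum_P nu P * (pad P)%:R = \sum_(P | pad P) nu P.
  by rewrite [RHS]big_mkcond; apply: eq_bigr => P _; case: (pad P); rewrite ?mulr1 ?mulr0.
have := nupad x; rewrite -/pad; lra.
Qed.
End Main.

Theorem fact3p4 (R : realType) (T : finType) (d : T -> T -> R) :
  is_metric d -> (zeta d (1 / 8) <= alpha d)%E.
Proof.
move=> _; apply/ereal_infP => _ [al [al0 pb] <-].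
apply: ereal_inf_lbound; exists al => //; split => //; exact: rzs.
Qed.
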